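(* Let $n\ge2$ and $1\le p\le n-1$. A permutation $\pi\in S_n$ is a $p$-resultant permutation if and only if $\{\pi_1,\dots,\pi_{n-p}\}=\{1,\dots,n-p\}$, i.e. $(\pi_1,\dots,\pi_{n-p})\in S_{n-p}$.
   Context: For $m\ge1$, $1\le p\le m$: sites are $0,\dots,m+1$; a configuration in $\mathcal{S}(m,p)$ places $m+1$ distinct chips labeled $1,\dots,m+1$ with sites $0,m+1$ empty, one chip at each site of $\{1,\dots,m\}\setminus\{p\}$ and two chips at site $p$. Toppling: while some site holds at least two chips, choose such a site $i$ and two chips $\alpha<\beta$ there and move $\alpha$ to $i-1$, $\beta$ to $i+1$. It is known this terminates with at most one chip per site within sites $0,\dots,m+1$ and the final configuration is independent of the choices; reading chip labels left to right gives a permutation in $S_{m+1}$, to which the configuration is said to topple. A permutation $\pi\in S_n$ is $p$-resultant if some configuration in $\mathcal{S}(n-1,p)$ topples to $\pi$. *)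

(* Defs.v *)
From mathcomp Require Import all_boot all_order all_algebra all_fingroup.
Set Implicit Arguments. Unset Strict Implicit. Unset Printing Implicit Defensive.
Import Order.TTheory GRing.Theory Num.Theory.

(* Chips labeled 1..n are modeled by the ordinals 'I_n (label k+1 <-> k),
   which preserves the order of labels.  A configuration assigns to every
   chip its site (an integer). *)
Definition config (n : nat) := 'I_n -> int.

Definition topple_step (n : nat) (c c' : config n) : Prop :=
  exists a b : 'I_n, (a < b)%N /\ c a = c b /\
    forall k : 'I_n,
      c' k = (if k == a then (c a - 1)%R else if k == b then (c b + 1)%R else c k).

Inductive topple_reach (n : nat) : config n -> config n -> Prop :=
| reach_refl c : topple_reach c c
| reach_step c c' c'' : topple_step c c' -> topple_reach c' c'' -> topple_reach c c''.

(* c topples to the permutation pi (with m + 1 = n chips, sites 0..m+1 = 0..n):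
   some sequence of topplings reaches a configuration with all chips within
   sites 0..n and at most one chip per site, and reading the chip labels from
   left to right gives pi_1, ..., pi_n (i.e. pi i is the (i+1)-th chip from the
   left). *)
Definition topples_to (n : nat) (c : config n) (pi : 'S_n) : Prop :=
  exists c' : config n, topple_reach c c' /\
    (forall k : 'I_n, (0 <= c' k)%R /\ (c' k <= Posz n)%R) /\
    (forall i j : 'I_n, (i < j)%N -> (c' (pi i) < c' (pi j))%R).

(* The set S(m,p) with m = n - 1: sites 0 and m+1 = n empty, one chip at each
   site of {1..m} \ {p}, two chips at site p. *)
Definition in_S (n p : nat) (c : config n) : Prop :=
  (forall k : 'I_n, (1 <= c k)%R /\ (c k <= Posz (n - 1)%N)%R) /\
  (forall s : nat, (1 <= s <= n - 1)%N ->
     #|[pred k : 'I_n | c k == Posz s]| = (if s == p then 2 else 1)%N).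

Definition p_resultant (n p : nat) (pi : 'S_n) : Prop :=
  exists c : config n, @in_S n p c /\ topples_to c pi.

(* Main.v *)
Require Import Defs.
From mathcomp Require Import all_boot all_order all_algebra all_fingroup.
From mathcomp Require Import zify.
From Stdlib Require Import FunctionalExtensionality.
Set Implicit Arguments. Unset Strict Implicit. Unset Printing Implicit Defensive.
Import GRing.Theory Num.Theory.


Section Conf.
Local Open Scope ring_scope.
Variable n : nat.
Implicit Types (c d : config n) (a b e : 'I_n).

Definition cnt c (s : int) : nat := (\sum_(x : 'I_n) (c x == s))%N.
Definition upd c (a b : 'I_n) : config n :=
  fun x => if x == a then c a - 1 else if x == b then c b + 1 else c x.

Lemma step_upd c c' : topple_step c c' ->
  exists a b : 'I_n, (a < b)%N /\ c a = c b /\ c' = upd c a b.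
Proof.
move=> [a [b [ab [eab H]]]]; exists a, b; split=> //; split=> //.
by apply: functional_extensionality => x; rewrite H.
Qed.

Lemma upd_step c a b : (a < b)%N -> c a = c b -> topple_step c (upd c a b).
Proof. by move=> ab eab; exists a, b. Qed.

Lemma cnt_upd c a b s : a != b -> c a = c b ->
  (cnt (upd c a b) s + 2 * (c a == s) = cnt c s + ((c a - 1)%R == s) + ((c a + 1)%R == s))%N.
Proof.
move=> nab eab; have nba : b != a by rewrite eq_sym.
rewrite /cnt (bigD1 a) //= (bigD1 b) ?nba //=.
rewrite [in RHS](bigD1 a) //= [in RHS](bigD1 b) ?nba //=.
rewrite (eq_bigr (fun x => (c x == s) : nat)); last first.
  by move=> x /andP [xa xb]; rewrite /upd (negbTE xa) (negbTE xb).
rewrite /upd eqxx [b == a]eq_sym (negbTE nab) eqxx -eab.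
set R := (\sum_(i | _) _)%N.
case: (c a - 1 == s); case: (c a + 1 == s); case: (c a == s) => /=; lia.
Qed.

Lemma cnt_ge2 c a b s : a != b -> c a = s -> c b = s -> (2 <= cnt c s)%N.
Proof.
move=> nab ea eb; have nba : b != a by rewrite eq_sym.
rewrite /cnt (bigD1 a) //= (bigD1 b) ?nba //= ea eb eqxx.
lia.
Qed.

Lemma cnt_ge3 c a b e s : a != b -> a != e -> b != e ->
  c a = s -> c b = s -> c e = s -> (3 <= cnt c s)%N.
Proof.
move=> nab nae nbe ea eb ee; have nba : b != a by rewrite eq_sym.
rewrite /cnt (bigD1 a) //= (bigD1 b) ?nba //=.
rewrite (bigD1 e) /=; last by rewrite eq_sym nae eq_sym nbe.
by rewrite ea eb ee eqxx; lia.
Qed.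

Definition Inv c := (forall s, (cnt c s <= 2)%N) /\
  (forall j k : int, j < k -> cnt c j = 2%N -> cnt c k = 2%N ->
     exists l, j < l < k /\ cnt c l = 0%N).

Lemma cnt_upd_if c a b s : a != b -> c a = c b -> cnt c (c a) = 2%N ->
  cnt (upd c a b) s = if s == c a then 0%N
    else if (s == c a - 1) || (s == c a + 1) then (cnt c s).+1 else cnt c s.
Proof.
move=> nab eab c2; have := cnt_upd s nab eab.
have [->|n1] := eqVneq s (c a).
  rewrite c2; have -> : (c a - 1 == c a) = false by apply/negbTE/eqP; lia.
  have -> : (c a + 1 == c a) = false by apply/negbTE/eqP; lia.
  lia.
rewrite [(c a - 1)%R == s]eq_sym [(c a + 1)%R == s]eq_sym.
have [->|n2] := eqVneq s (c a - 1).
  have -> : (c a - 1 == c a + 1) = false by apply/negbTE/eqP; lia.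
  simpl; lia.
have [->|n3] := eqVneq s (c a + 1); simpl; lia.
Qed.

Lemma Inv_step c c' : Inv c -> topple_step c c' -> Inv c'.
Proof.
move=> [I1 I2] /step_upd [a [b [ab [eab ->]]]].
have nab : a != b by rewrite neq_ltn ab.
set i := c a.
have c2 : cnt c i = 2%N by apply/eqP; rewrite eqn_leq I1 (cnt_ge2 nab) //.
have nb : forall s, s = i - 1 \/ s = i + 1 -> (cnt c s <= 1)%N.
  move=> s hs; have := I1 s; rewrite leq_eqVlt => /orP [/eqP e|]; last by [].
  case: hs => hs.
  - have [l [hl _]] := I2 s i ltac:(lia) e c2; lia.
  - have [l [hl _]] := I2 i s ltac:(lia) c2 e; lia.
have E := fun s => cnt_upd_if s nab eab c2; rewrite -/i in E.
split.
  move=> s; rewrite E; case: eqP => // _; case: ifP => // /orP h.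
  by have := nb s ltac:(case: h => /eqP; auto).
move=> j k jk; rewrite !E.
case: (j =P i) => // nj; case: (k =P i) => // nk.
have [lt1 | ge1] := boolP ((j < i) && (i < k)).
  by move=> _ _; exists i; split; [exact: lt1| rewrite E eqxx].
have jk' : (k < i) \/ (i < j).
  case: (boolP (k < i)) => hki; first by left.
  case: (boolP (i < j)) => hij; first by right.
  exfalso; move/negP: ge1; apply; apply/andP; split; lia.
case: ifP => hj; case: ifP => hk jj kk.
- exfalso; move/orP: hj => [] /eqP hj; move/orP: hk => [] /eqP hk; lia.
-
  have cj : cnt c j = 1%N by lia.
  move/orP: hj => [] /eqP hj.
  + exfalso; lia.
  + have [l [hl hl0]] := I2 i k ltac:(lia) c2 kk.
    exists l; split; first by (have : l != j by apply/eqP => e; subst; lia); lia.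
    rewrite E; have -> : (l == i) = false by apply/negbTE/eqP; lia.
    have -> : (l == i - 1) || (l == i + 1) = false.
      by apply/negbTE/negP => /orP [] /eqP e; subst; lia.
    exact: hl0.
- have ck : cnt c k = 1%N by lia.
  move/orP: hk => [] /eqP hk.
  + have [l [hl hl0]] := I2 j i ltac:(lia) jj c2.
    exists l; split; first by (have : l != k by apply/eqP => e; subst; lia); lia.
    rewrite E; have -> : (l == i) = false by apply/negbTE/eqP; lia.
    have -> : (l == i - 1) || (l == i + 1) = false.
      by apply/negbTE/negP => /orP [] /eqP e; subst; lia.
    exact: hl0.
  + exfalso; lia.
- have [l [hl hl0]] := I2 j k jk jj kk.
  exists l; split=> //.
  have hl' : (l == i) = false /\ ((l == i - 1) || (l == i + 1)) = false.
    split; first by apply/negbTE/eqP => e; subst; lia.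
    apply/negbTE/negP => /orP [] /eqP e; subst.
    * case: jk' => h.
      - move/negbT: hk => /orP hk; apply: hk; left; apply/eqP; lia.
      - lia.
    * case: jk' => h.
      - lia.
      - move/negbT: hj => /orP hj; apply: hj; right; apply/eqP; lia.
  by rewrite E hl'.1 hl'.2.
Qed.


Lemma upd_ne c a b x : x != a -> x != b -> upd c a b x = c x.
Proof. by move=> xa xb; rewrite /upd (negbTE xa) (negbTE xb). Qed.

Lemma diamond c c1 c2 : Inv c -> topple_step c c1 -> topple_step c c2 ->
  c1 = c2 \/ exists d, topple_step c1 d /\ topple_step c2 d.
Proof.
move=> [I1 _] /step_upd [a [b [ab [eab ->]]]] /step_upd [a' [b' [ab' [eab' ->]]]].
have nab : a != b by rewrite neq_ltn ab.
have nab' : a' != b' by rewrite neq_ltn ab'.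
have [e|ne] := eqVneq (c a) (c a').
  left.
  have H3 : forall x, c x = c a -> x = a \/ x = b.
    move=> x cx; case: (eqVneq x a) => xa; first by left.
    case: (eqVneq x b) => xb; first by right.
    rewrite eq_sym in xa; rewrite eq_sym in xb.
    have := cnt_ge3 nab xa xb erefl (esym eab) cx.
    have := I1 (c a); lia.
  have [ea'|ea'] := H3 a' (esym e); have [eb'|eb'] := H3 b' (etrans (esym eab') (esym e)).
  - by subst; rewrite eqxx in nab'.
  - by subst.
  - by subst; exfalso; move: ab ab'; lia.
  - by subst; rewrite eqxx in nab'.
right.
have a'a : a' != a by apply/eqP => h; subst; rewrite eqxx in ne.
have a'b : a' != b by apply/eqP => h; subst; rewrite eab eqxx in ne.
have b'a : b' != a by apply/eqP => h; subst; rewrite eab' eqxx in ne.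
have b'b : b' != b by apply/eqP => h; subst; rewrite eab eab' eqxx in ne.
exists (upd (upd c a b) a' b'); split.
  apply: upd_step => //; by rewrite !upd_ne.
have -> : upd (upd c a b) a' b' = upd (upd c a' b') a b.
  apply: functional_extensionality => x; rewrite /upd.
  rewrite (negbTE a'a) (negbTE a'b) (negbTE b'a) (negbTE b'b).
  rewrite [a == a']eq_sym [a == b']eq_sym [b == a']eq_sym [b == b']eq_sym.
  rewrite (negbTE a'a) (negbTE a'b) (negbTE b'a) (negbTE b'b).
  case: (eqVneq x a) => [->|xa]; first by rewrite eq_sym (negbTE a'a) eq_sym (negbTE b'a).
  case: (eqVneq x b) => [->|xb]; first by rewrite eq_sym (negbTE a'b) eq_sym (negbTE b'b).
  by case: (x == a'); case: (x == b').
apply: upd_step => //; by rewrite !upd_ne // eq_sym.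
Qed.

Lemma reach_trans c1 c2 c3 : topple_reach c1 c2 -> topple_reach c2 c3 -> topple_reach c1 c3.
Proof.
elim=> [//|x y z s _ IH] h; apply: reach_step s (IH h).
Qed.

Lemma Inv_reach c d : Inv c -> topple_reach c d -> Inv d.
Proof. by move=> + h; elim: h => // x y z s _ IH /(Inv_step) /(_ s). Qed.

Lemma strip c c1 d : Inv c -> topple_step c c1 -> topple_reach c d ->
  exists f : config n, topple_reach c1 f /\ (f = d \/ topple_step d f).
Proof.
move=> + + h; move: c1; elim: h => [x c1 _ s|x y z s hyz IH c1 Ix s1].
  by exists c1; split; [exact: reach_refl | right].
case: (diamond Ix s1 s) => [->|[w [w1 w2]]].
  by exists z; split => //; left.
have [f [he1 he2]] := IH w (Inv_step Ix s) w2.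
by exists f; split => //; apply: reach_step w1 he1.
Qed.

Definition normal c := forall c', ~ topple_step c c'.

Lemma nf_unique c d1 d2 : Inv c -> topple_reach c d1 -> topple_reach c d2 ->
  normal d1 -> normal d2 -> d1 = d2.
Proof.
move=> Ic h1 h2 n1 n2.
suff H : topple_reach d2 d1.
  inversion H; first by [].
  by exfalso; eapply n2; eassumption.
elim: h2 Ic h1 => // x y z s _ IH Ix h1.
apply: IH; first exact: Inv_step Ix s.
have [f [he [<-|se]]] := strip Ix s h1 => //.
by case: (n1 _ se).
Qed.

Lemma inj_normal c : (forall x y, c x = c y -> x = y) -> normal c.
Proof.
move=> inj c' [a [b [ab [eab _]]]].
by move: (inj _ _ eab) ab => ->; rewrite ltnn.
Qed.

End Conf.


Section Wave.
Local Open Scope ring_scope.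
Variable n : nat.
Implicit Types (c d : config n) (a b e : 'I_n).

Lemma cnt_card c s : cnt c s = #|[set x | c x == s]|.
Proof.
rewrite /cnt -sum1_card [RHS]big_mkcond /=; apply: eq_bigr => x _.
by rewrite inE; case: (c x == s).
Qed.

Lemma two_chips c q : cnt c q = 2%N -> exists a b, (a < b)%N /\ c a = q /\ c b = q /\
  forall x, c x = q -> x = a \/ x = b.
Proof.
rewrite cnt_card => /eqP /cards2P [x [y [nxy E]]].
have inA : forall z, (z \in [set x | c x == q]) = (c z == q) by move=> z; rewrite inE.
have hx : c x = q by apply/eqP; rewrite -inA E !inE eqxx.
have hy : c y = q by apply/eqP; rewrite -inA E !inE eqxx orbT.
have H : forall z, c z = q -> z = x \/ z = y.
  move=> z hz; have : z \in [set x | c x == q] by rewrite inE hz.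
  by rewrite E !inE => /orP [] /eqP ->; [left|right].
case: (ltngtP x y) => [xy|yx|e].
- by exists x, y.
- by exists y, x; do 3!split=> //; move=> z /H [] ->; [right|left].
- by move/val_inj: e nxy => ->; rewrite eqxx.
Qed.

Lemma sum_interval c (lo : int) (k : nat) :
  (\sum_x (((lo <= c x)%R && (c x < lo + k%:Z)%R) : nat) = \sum_(j < k) cnt c (lo + j%:Z)%R)%N.
Proof.
elim: k => [|k IH].
  rewrite big_ord0; apply: big1 => x _; case: (boolP (lo <= c x)) => /= h //.
  apply/eqP; rewrite eqb0; apply/negP; lia.
rewrite big_ord_recr /= -IH /cnt -big_split /=; apply: eq_bigr => x _.
case: (boolP (lo <= c x)) => h1 /=; case: (boolP (c x < lo + k%:Z)) => h2 /=;
  case: (boolP (c x == lo + k%:Z)) => h3 /=; case: (boolP (c x < lo + k.+1%:Z)) => h4 /=;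
  lia.
Qed.


Lemma cnt_fire c a b s : a != b -> c a = c b -> cnt c (c a) = 2%N ->
  cnt (upd c a b) s = if s == c a then 0%N
    else if (s == c a - 1) || (s == c a + 1) then (cnt c s).+1 else cnt c s.
Proof. exact: cnt_upd_if. Qed.

Lemma wave (k : nat) : forall c (q : int), cnt c q = 2%N ->
  (forall s, q < s <= q + k%:Z -> cnt c s = 1%N) ->
  exists d M, topple_reach c d /\
   (forall s, cnt d s = if s == q - 1 then (cnt c s).+1
       else if (q <= s) && (s < q + k%:Z) then 1%N
       else if s == q + k%:Z then 0%N
       else if s == q + k%:Z + 1 then (cnt c s).+1 else cnt c s) /\
   (forall x, ~~ ((q <= c x) && (c x <= q + k%:Z)) -> d x = c x) /\
   (q <= c M <= q + k%:Z) /\ d M = q + k%:Z + 1 /\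
   (forall x, q <= c x <= q + k%:Z -> (x <= M)%N) /\
   (forall x, q <= c x <= q + k%:Z -> x != M -> q - 1 <= d x <= q + k%:Z - 1).
Proof.
elim: k => [|k IH] c q c2 H1.
  have [a [b [ab [ca [cb ab2]]]]] := two_chips c2.
  have nab : a != b by rewrite neq_ltn ab.
  have eab : c a = c b by rewrite ca cb.
  have C := fun s => cnt_fire s nab eab; rewrite ca in C; have {}C := fun s => C s c2.
  exists (upd c a b), b; split; first exact: reach_step (upd_step ab eab) (reach_refl _).
  split.
    move=> s; rewrite C.
    case: (boolP (s == q)) => h1; case: (boolP (s == q - 1)) => h2;
    case: (boolP (s == q + 1)) => h3; case: (boolP ((q <= s) && (s < q + 0%:Z))) => h4;
    case: (boolP (s == q + 0%:Z)) => h5; case: (boolP (s == q + 0%:Z + 1)) => h6 /=; lia.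
  split.
    move=> x hx; have xa : x != a by apply/eqP => e; move: hx; rewrite e ca; lia.
    have xb : x != b by apply/eqP => e; move: hx; rewrite e cb; lia.
    by rewrite upd_ne.
  split; first by rewrite cb; lia.
  split; first by rewrite /upd eq_sym (negbTE nab) eqxx cb; lia.
  split.
    move=> x hx; have : c x = q by lia.
    by case/ab2 => ->; [exact: ltnW|].
  move=> x hx xb; have : c x = q by lia.
  case/ab2 => e; last by rewrite e eqxx in xb.
  by rewrite e /upd eqxx ca; lia.
have [a [b [ab [ca [cb ab2]]]]] := two_chips c2.
have nab : a != b by rewrite neq_ltn ab.
have eab : c a = c b by rewrite ca cb.
have C := fun s => cnt_fire s nab eab; rewrite ca in C; have {}C := fun s => C s c2.
set c1 := upd c a b.
have c1a : c1 a = q - 1 by rewrite /c1 /upd eqxx ca.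
have c1b : c1 b = q + 1 by rewrite /c1 /upd eq_sym (negbTE nab) eqxx cb.
have c1x : forall x, x != a -> x != b -> c1 x = c x by move=> x; exact: upd_ne.
have c12 : cnt c1 (q + 1) = 2%N.
  rewrite C; have -> : (q + 1 == q) = false by apply/negbTE/eqP; lia.
  rewrite eqxx orbT H1 //; lia.
have H1' : forall s, q + 1 < s <= q + 1 + k%:Z -> cnt c1 s = 1%N.
  move=> s hs; rewrite C.
  have -> : (s == q) = false by apply/negbTE/eqP; lia.
  have -> : (s == q - 1) || (s == q + 1) = false by apply/negbTE/negP => /orP [] /eqP; lia.
  apply: H1; lia.
have [d [M [rd [Cd [Fd [HM1 [HM2 [HM3 HM4]]]]]]]] := IH c1 (q + 1) c12 H1'.
exists d, M; split; first exact: reach_step (upd_step ab eab) rd.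
split.
  move=> s; rewrite Cd !C.
  case: (boolP (s == q)) => h1; case: (boolP (s == q - 1)) => h2;
  case: (boolP (s == q + 1)) => h3;
  case: (boolP (s == q + 1 - 1)) => h4;
  case: (boolP ((q + 1 <= s) && (s < q + 1 + k%:Z))) => h5;
  case: (boolP (s == q + 1 + k%:Z)) => h6;
  case: (boolP (s == q + 1 + k%:Z + 1)) => h7;
  case: (boolP ((q <= s) && (s < q + k.+1%:Z))) => h8;
  case: (boolP (s == q + k.+1%:Z)) => h9;
  case: (boolP (s == q + k.+1%:Z + 1)) => h10 /=; try lia.
split.
  move=> x hx; have xa : x != a by apply/eqP => e; move: hx; rewrite e ca; lia.
  have xb : x != b by apply/eqP => e; move: hx; rewrite e cb; lia.
  have e1 := c1x x xa xb; rewrite Fd e1 //; lia.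
have Ma : M != a by apply/eqP => e; move: HM1; rewrite e c1a; lia.
split.
  case: (eqVneq M b) => [->|Mb]; first by rewrite cb; lia.
  by move: HM1; rewrite c1x //; lia.
split; first by rewrite HM2; lia.
have inr : forall x, q <= c x <= q + k.+1%:Z -> x != a -> x != b -> q + 1 <= c1 x <= q + 1 + k%:Z.
  move=> x hx xa xb; rewrite c1x //.
  have : c x != q by apply/eqP => /ab2 [] e; [rewrite e eqxx in xa|rewrite e eqxx in xb].
  move/eqP; lia.
split.
  move=> x hx; case: (eqVneq x a) => [->|xa].
    apply: ltnW; apply: (leq_trans ab); apply: HM3; rewrite c1b; lia.
  case: (eqVneq x b) => [->|xb]; first by apply: HM3; rewrite c1b; lia.
  exact: HM3 (inr x hx xa xb).
move=> x hx xM; case: (eqVneq x a) => [->|xa].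
  rewrite Fd c1a //; lia.
case: (eqVneq x b) => [e|xb].
  subst x; have := HM4 b ltac:(rewrite c1b; lia) xM; lia.
have := HM4 x (inr x hx xa xb) xM; lia.
Qed.

End Wave.


Lemma sum_ones (k : nat) : (\sum_(j < k) 1 = k)%N.
Proof. by elim: k => [|k IH]; rewrite ?big_ord0 // big_ord_recr IH /=; rewrite addn1. Qed.

Lemma sum_shape (k : nat) (f : nat -> nat) : (0 < k)%N -> f 0%N = 2%N ->
  (forall j, (0 < j < k)%N -> f j = 1%N) -> (\sum_(j < k) f j = k.+1)%N.
Proof.
case: k => // k _ f0 f1; rewrite big_ord_recl f0.
rewrite (eq_bigr (fun _ => 1%N)); last by move=> j _; apply: f1; rewrite lift0 /= ltnS ltn_ord.
by rewrite sum_ones.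
Qed.

Section Main.
Local Open Scope ring_scope.
Variable n : nat.
Implicit Types (c d : config n) (a b e : 'I_n).

Lemma sumD1n (F : 'I_n -> nat) a : (\sum_x F x = F a + \sum_(x | x != a) F x)%N.
Proof. by rewrite (bigD1 a). Qed.

Lemma sum_int_shape c (lo : int) (k : nat) :
  (0 < k)%N -> cnt c lo = 2%N -> (forall j, (0 < j < k)%N -> cnt c (lo + j%:Z) = 1%N) ->
  (\sum_x (((lo <= c x)%R && (c x < lo + k%:Z)%R) : nat) = k.+1)%N.
Proof.
move=> k0 c0 c1; rewrite sum_interval; apply: (@sum_shape k (fun j => cnt c (lo + j%:Z))) => //.
by rewrite addr0.
Qed.


Definition actv (base : int) (m : nat) c x : bool := (base < c x) && (c x < base + m%:Z).

Definition Shape c (base : int) (m p : nat) := forall s, base <= s <= base + m%:Z ->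
  cnt c s = if (s == base) || (s == base + m%:Z) then 0%N
            else if s == base + p%:Z then 2%N else 1%N.

Definition Concl c (base : int) (m p T : nat) d :=
  topple_reach c d /\
  (forall x, ~~ actv base m c x -> d x = c x) /\
  (forall x, actv base m c x ->
     [/\ base <= d x <= base + m%:Z, d x != base + (m - p)%:Z &
         (d x < base + (m - p)%:Z) = (x < T)%N]) /\
  (forall x y, actv base m c x -> actv base m c y -> d x = d y -> x = y).

Lemma main_p1 (T m : nat) base c
  (IH : forall p base c, (2 <= m)%N -> (1 <= p < m)%N -> Shape c base m p ->
      (\sum_x ((actv base m c x && (x < T)) : nat) = m - p)%N ->
      exists d, Concl c base m p T d) :
  (2 <= m.+1)%N -> Shape c base m.+1 1 ->
  (\sum_x ((actv base m.+1 c x && (x < T)) : nat) = m.+1 - 1)%N ->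
  exists d, Concl c base m.+1 1 T d.
Proof.
move=> hm Hs HT.
have c2 : cnt c (base + 1) = 2%N.
  rewrite Hs; last by lia.
  have -> : (base + 1 == base) = false by apply/negbTE/eqP; lia.
  have -> : (base + 1 == base + m.+1%:Z) = false by apply/negbTE/eqP; lia.
  by rewrite eqxx.
have [a [b [ab [ca [cb ab2]]]]] := two_chips c2.
have nab : a != b by rewrite neq_ltn ab.
have eab : c a = c b by rewrite ca cb.
have C := fun s => cnt_fire s nab eab; rewrite ca in C; have {}C := fun s => C s c2.
set c1 := upd c a b.
have c1a : c1 a = base by rewrite /c1 /upd eqxx ca; lia.
have c1b : c1 b = base + 2%:Z by rewrite /c1 /upd eq_sym (negbTE nab) eqxx cb; lia.
have c1x : forall x, x != a -> x != b -> c1 x = c x by move=> x; exact: upd_ne.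
have cxab : forall x, x != a -> x != b -> c x != base + 1.
  by move=> x xa xb; apply/eqP => /ab2 [] e; [rewrite e eqxx in xa|rewrite e eqxx in xb].
set act := actv base m.+1 c.
have acta : act a by rewrite /act /actv ca; lia.
have actb : act b by rewrite /act /actv cb; lia.
have Sact : (\sum_x (act x : nat) = m.+1)%N.
  have hj1 : forall j, (0 < j < m)%N -> cnt c (base + 1 + j%:Z) = 1%N.
    move=> j hj; rewrite Hs; last by lia.
    have -> : (base + 1 + j%:Z == base) = false by apply/negbTE/eqP; lia.
    have -> : (base + 1 + j%:Z == base + m.+1%:Z) = false by apply/negbTE/eqP; lia.
    have -> : (base + 1 + j%:Z == base + 1%:Z) = false by apply/negbTE/eqP; lia.
    by [].
  rewrite -(@sum_int_shape c (base + 1) m ltac:(lia) c2 hj1).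
  by apply: eq_bigr => x _; rewrite /act /actv; congr (nat_of_bool _); lia.
have sab : forall F : 'I_n -> nat, (\sum_x F x = F a + F b + \sum_(x | (x != a) && (x != b)) F x)%N.
  move=> F; rewrite (bigD1 a) // (bigD1 b) /=; last by rewrite eq_sym.
  by rewrite addnA.
have aT : (a < T)%N.
  case: (boolP (a < T)%N) => // naT; exfalso.
  have nbT : ~~ (b < T)%N by move: naT ab; lia.
  move: HT Sact; rewrite !sab -/act acta actb (negbTE naT) (negbTE nbT) /=.
  set SP := (\sum_(x | _) _)%N; set SQ := (\sum_(x | _) _)%N.
  have : (SP <= SQ)%N.
    by rewrite /SP /SQ; apply: leq_sum => x _; case: (act x); case: (x < T)%N.
  lia.
case: (eqVneq m 1%N) => [m1|m2].
  subst m.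
  have nbT : ~~ (b < T)%N.
    apply/negP => bT; move: HT; rewrite sab -/act acta actb aT bT /=; lia.
  exists c1; split; first exact: reach_step (upd_step ab eab) (reach_refl _).
  have ab' : forall x, act x -> x = a \/ x = b.
    by move=> x; rewrite /act /actv => hx; apply: ab2; lia.
  split.
    move=> x hx; have xa : x != a by apply/eqP => e; move: hx; rewrite e -/act acta.
    have xb : x != b by apply/eqP => e; move: hx; rewrite e -/act actb.
    exact: c1x.
  split.
    move=> x hx; case: (ab' x hx) => ->.
      by rewrite c1a aT; split; lia.
    by rewrite c1b (negbTE nbT); split; lia.
  move=> x y hx hy; case: (ab' x hx) => ->;
    case: (ab' y hy) => -> //; rewrite c1a c1b; lia.
have m2' : (2 <= m)%N by lia.
have actE : forall x, x != a -> actv (base + 1) m c1 x = act x.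
  move=> x xa; case: (eqVneq x b) => [->|xb].
    by rewrite /actv c1b actb; lia.
  rewrite /actv c1x // /act /actv; have := cxab x xa xb; move/eqP; lia.
have Hs1 : Shape c1 (base + 1) m 1.
  move=> s hs; rewrite C Hs; last by lia.
  case: (boolP (s == base + 1)) => h1; case: (boolP (s == base + 1 - 1)) => h2;
  case: (boolP (s == base + 1 + 1)) => h3; case: (boolP (s == base)) => h4;
  case: (boolP (s == base + m.+1%:Z)) => h5; case: (boolP (s == base + 1%:Z)) => h6;
  case: (boolP (s == base + 1 + m%:Z)) => h7; case: (boolP (s == base + 1 + 1%:Z)) => h8 /=;
  lia.
have HT1 : (\sum_x ((actv (base + 1) m c1 x && (x < T)) : nat) = m - 1)%N.
  rewrite (sumD1n _ a).
  have -> : actv (base + 1) m c1 a = false by rewrite /actv c1a; lia.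
  rewrite (eq_bigr (fun x => ((act x && (x < T)%N) : nat))); last first.
    by move=> x xa; rewrite actE.
  move: HT; rewrite (sumD1n _ a) -/act acta aT /=; lia.
have [d [rd [Fd [Ad Id]]]] := IH 1%N (base + 1) c1 m2' ltac:(lia) Hs1 HT1.
exists d; split; first exact: reach_step (upd_step ab eab) rd.
have da : d a = base.
  rewrite Fd; first exact: c1a. by rewrite /actv c1a; lia.
split.
  move=> x hx; have xa : x != a by apply/eqP => e; move: hx; rewrite e -/act acta.
  have xb : x != b by apply/eqP => e; move: hx; rewrite e -/act actb.
  rewrite Fd; first exact: c1x. by rewrite actE.
split.
  move=> x hx; case: (eqVneq x a) => [->|xa].
    by rewrite da aT; split; lia.
  have [H1 H2 H3] := Ad x ltac:(by rewrite actE).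
  split; [lia|move: H2; apply: contra => /eqP H2; apply/eqP; lia|].
  rewrite -H3; congr (_ < _); lia.
move=> x y hx hy; case: (eqVneq x a) => [->|xa]; case: (eqVneq y a) => [->|ya] //.
- have [H1 _ _] := Ad y ltac:(by rewrite actE).
  rewrite da; lia.
- have [H1 _ _] := Ad x ltac:(by rewrite actE).
  rewrite da; lia.
- by apply: Id; rewrite actE.
Qed.

Lemma main_p2 (T m p : nat) base c
  (IH : forall p base c, (2 <= m)%N -> (1 <= p < m)%N -> Shape c base m p ->
      (\sum_x ((actv base m c x && (x < T)) : nat) = m - p)%N ->
      exists d, Concl c base m p T d) :
  (2 <= p < m.+1)%N -> Shape c base m.+1 p ->
  (\sum_x ((actv base m.+1 c x && (x < T)) : nat) = m.+1 - p)%N ->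
  exists d, Concl c base m.+1 p T d.
Proof.
move=> hp Hs HT.
set q := base + p%:Z.
have c2 : cnt c q = 2%N.
  rewrite Hs; last by lia.
  have -> : (q == base) = false by apply/negbTE/eqP; lia.
  have -> : (q == base + m.+1%:Z) = false by apply/negbTE/eqP; lia.
  by rewrite eqxx.
have H1 : forall s, q < s <= q + (m - p)%:Z -> cnt c s = 1%N.
  move=> s hs; rewrite Hs; last by lia.
  have -> : (s == base) = false by apply/negbTE/eqP; lia.
  have -> : (s == base + m.+1%:Z) = false by apply/negbTE/eqP; lia.
  have -> : (s == base + p%:Z) = false by apply/negbTE/eqP; lia.
  by [].
have [c1 [M [rc1 [Cc1 [Fc1 [HM1 [HM2 [HM3 HM4]]]]]]]] := wave c2 H1.
set act := actv base m.+1 c.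
have MT : ~~ (M < T)%N.
  apply/negP => MT.
  have hj : forall j, (0 < j < (m - p).+1)%N -> cnt c (q + j%:Z) = 1%N.
    by move=> j hj; apply: H1; lia.
  have := @sum_int_shape c q (m - p).+1 ltac:(lia) c2 hj.
  have : (\sum_x ((((q <= c x)%R && (c x < q + (m - p).+1%:Z)%R)) : nat)
          <= \sum_x ((act x && (x < T)) : nat))%N.
    apply: leq_sum => x _; case: (boolP ((q <= c x) && (c x < q + (m - p).+1%:Z))) => //= hx.
    have -> : act x by rewrite /act /actv; lia.
    by rewrite (leq_ltn_trans (HM3 x ltac:(lia)) MT).
  move=> Hle Heq; rewrite Heq HT in Hle; lia.
have m2 : (2 <= m)%N by lia.
have actE : forall x, x != M -> actv base m c1 x = act x.
  move=> x xM; case: (boolP ((q <= c x) && (c x <= q + (m - p)%:Z))) => hx.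
    have := HM4 x ltac:(lia) xM; rewrite /act /actv; lia.
  by rewrite /actv Fc1 // /act /actv; lia.
have actM : actv base m c1 M = false by rewrite /actv HM2; lia.
have Hs1 : Shape c1 base m p.-1.
  move=> s hs; rewrite Cc1 Hs; last by lia.
  case: (boolP (s == q - 1)) => h1;
  case: (boolP ((q <= s) && (s < q + (m - p)%:Z))) => h2;
  case: (boolP (s == q + (m - p)%:Z)) => h3;
  case: (boolP (s == q + (m - p)%:Z + 1)) => h4;
  case: (boolP (s == base)) => h5;
  case: (boolP (s == base + m.+1%:Z)) => h6;
  case: (boolP (s == base + p%:Z)) => h7;
  case: (boolP (s == base + m%:Z)) => h8;
  case: (boolP (s == base + p.-1%:Z)) => h9 /=; lia.
have HT1 : (\sum_x ((actv base m c1 x && (x < T)) : nat) = m - p.-1)%N.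
  rewrite (sumD1n _ M) actM /=.
  rewrite (eq_bigr (fun x => ((act x && (x < T)%N) : nat))); last first.
    by move=> x xM; rewrite actE.
  move: HT; rewrite (sumD1n _ M) -/act (negbTE MT) andbF /=; lia.
have [d [rd [Fd [Ad Id]]]] := IH p.-1 base c1 m2 ltac:(lia) Hs1 HT1.
exists d; split; first exact: reach_trans rc1 rd.
have dM : d M = base + m.+1%:Z.
  rewrite Fd; first by rewrite HM2; lia.
  by rewrite actM.
split.
  move=> x hx.
  have xM : x != M by apply/eqP => e; move: hx; rewrite e /actv; lia.
  have hx' : ~~ ((q <= c x) && (c x <= q + (m - p)%:Z)) by move: hx; rewrite /actv; lia.
  rewrite Fd; first exact: Fc1.
  by rewrite actE.
split.
  move=> x hx; case: (eqVneq x M) => [->|xM].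
    by rewrite dM (negbTE MT); split; lia.
  have [K1 K2 K3] := Ad x ltac:(by rewrite actE).
  split; [lia|move: K2; apply: contra => /eqP K2; apply/eqP; lia|].
  rewrite -K3; congr (_ < _); lia.
move=> x y hx hy; case: (eqVneq x M) => [->|xM]; case: (eqVneq y M) => [->|yM] //.
- have [K1 _ _] := Ad y ltac:(by rewrite actE).
  rewrite dM; lia.
- have [K1 _ _] := Ad x ltac:(by rewrite actE).
  rewrite dM; lia.
- by apply: Id; rewrite actE.
Qed.

Lemma main (T m : nat) : forall p base c, (2 <= m)%N -> (1 <= p < m)%N -> Shape c base m p ->
      (\sum_x ((actv base m c x && (x < T)) : nat) = m - p)%N ->
      exists d, Concl c base m p T d.
Proof.
elim: m => [|m IH] p base c hm hp Hs HT; first by lia.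
case: (eqVneq p 1%N) => [e|ne].
  subst p; exact: main_p1.
apply: main_p2 => //; lia.
Qed.

End Main.


Lemma card_pre n (pi : 'S_n) (P : pred 'I_n) :
  #|[pred x | P ((pi^-1)%g x)]| = #|[pred i | P i]|.
Proof.
rewrite -(card_imset [pred i | P i] (@perm_inj _ pi)).
apply: eq_card => x; rewrite !inE; apply/idP/imsetP.
  by move=> hx; exists ((pi^-1)%g x); [rewrite inE | rewrite permKV].
by case=> i hi ->; rewrite permK.
Qed.

Lemma sum_lt n h : (h <= n)%N -> (\sum_(x < n) ((x < h)%N : nat) = h)%N.
Proof.
move=> hn; rewrite -{2}(sum_ones h) (big_ord_widen n (fun _ => 1%N) hn) [RHS]big_mkcond.
by apply: eq_bigr => x _; case: (x < h)%N.
Qed.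

Section Back.
Local Open Scope ring_scope.
Variables (n p : nat) (pi : 'S_n).
Hypothesis hn : (2 <= n)%N.
Hypothesis hp : (1 <= p <= n - 1)%N.
Let h := (n - p)%N.
Hypothesis Hset : [set pi i | i : 'I_n & (i < h)%N] = [set i : 'I_n | (i < h)%N].

Lemma small (i : 'I_n) : (i < h)%N -> (pi i < h)%N.
Proof.
move=> hi; have : pi i \in [set pi i | i : 'I_n & (i < h)%N] by apply: imset_f; rewrite inE.
by rewrite Hset inE.
Qed.

Lemma big (i : 'I_n) : (h <= i)%N -> (h <= pi i)%N.
Proof.
move=> hi; rewrite leqNgt; apply/negP => pih.
have : pi i \in [set i : 'I_n | (i < h)%N] by rewrite inE.
rewrite -Hset => /imsetP [i' hi' /perm_inj e]; move: hi'; rewrite inE -e; lia.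
Qed.

Definition pos (j k i : nat) : int :=
  if (i < h)%N then (if (i < k)%N then p%:Z - j%:Z - 1 + i%:Z else p%:Z - j%:Z + i%:Z)
  else if (i - h + j + 1 < p)%N then (i - h)%:Z + 1
  else if (i - h + j + 1 == p)%N then p%:Z - j%:Z + k%:Z
  else h%:Z + 1 + (i - h)%:Z.

Definition st (j k : nat) : config n := fun x => pos j k ((pi^-1)%g x).

Lemma st_pi j k i : st j k (pi i) = pos j k i.
Proof. by rewrite /st permK. Qed.

Lemma step_st j k : (j < p)%N -> (k < h)%N -> topple_step (st j k) (st j k.+1).
Proof.
move=> jp kh.
have kn : (k < n)%N by lia.
have bn : (n - 1 - j < n)%N by lia.
set ka := Ordinal kn; set kb := Ordinal bn.
exists (pi ka), (pi kb); split.
  have := small (i:=ka) kh; have := big (i:=kb) ltac:(rewrite /= /h; lia); lia.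
have pa : pos j k ka = p%:Z - j%:Z + k%:Z by rewrite /pos /= kh ltnn.
have pb : pos j k kb = p%:Z - j%:Z + k%:Z.
  rewrite /pos /=; have -> : (n - 1 - j < h)%N = false by rewrite /h; lia.
  have -> : (n - 1 - j - h + j + 1 < p)%N = false by rewrite /h; lia.
  by have -> : (n - 1 - j - h + j + 1 == p)%N by rewrite /h; apply/eqP; lia.
split; first by rewrite !st_pi pa pb.
move=> x; rewrite -(permKV pi x); set i := (pi^-1)%g x.
rewrite !st_pi !(inj_eq perm_inj) pa pb.
case: (eqVneq i ka) => [->|ia].
  by rewrite /pos /= kh ltnSn; lia.
case: (eqVneq i kb) => [->|ib].
  rewrite /pos /=; have -> : (n - 1 - j < h)%N = false by rewrite /h; lia.
  have -> : (n - 1 - j - h + j + 1 < p)%N = false by rewrite /h; lia.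
  rewrite (_ : (n - 1 - j - h + j + 1 == p)%N = true); last by apply/eqP; rewrite /h; lia.
  lia.
have ia' : (i : nat) != k by exact: ia.
have ib' : (i : nat) != (n - 1 - j)%N by exact: ib.
rewrite /pos; case: ifP => h1; first by case: ifP => h2; case: ifP => h3 //; lia.
case: ifP => h2 //; case: ifP => h3 //; lia.
Qed.

Lemma reach_round j : (j < p)%N -> forall k, (k <= h)%N -> topple_reach (st j 0) (st j k).
Proof.
move=> jp; elim=> [|k IH] hk; first exact: reach_refl.
apply: reach_trans (IH ltac:(lia)) _.
have kh : (k < h)%N by lia.
exact: reach_step (step_st jp kh) (reach_refl _).
Qed.

Lemma round_next j : (j < p)%N -> st j h = st j.+1 0.
Proof.
move=> jp; apply: functional_extensionality => x; rewrite /st.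
set i := (pi^-1)%g x; have := ltn_ord i; move: (nat_of_ord i) => i' hi'.
have hh : h = (n - p)%N by []. rewrite /pos ltn0; (repeat case: ifP => ?); lia.
Qed.


Lemma reach_all j : (j <= p)%N -> topple_reach (st 0 0) (st j 0).
Proof.
elim: j => [|j IH] hj; first exact: reach_refl.
apply: reach_trans (IH ltac:(lia)) _.
rewrite -round_next; last by lia.
exact: reach_round.
Qed.

Lemma final_pos (i : 'I_n) : st p 0 (pi i) = if (i < h)%N then (i : nat)%:Z else (i.+1)%:Z.
Proof.
rewrite st_pi /pos ltn0.
have hh : h = (n - p)%N by [].
have ilt := ltn_ord i.
case: ifP => h1; first by lia.
rewrite (_ : (i - h + p + 1 < p)%N = false); last by lia.
rewrite (_ : (i - h + p + 1 == p)%N = false); last by apply/negbTE/eqP; lia.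
lia.
Qed.

Lemma in_S_st : @in_S n p (st 0 0).
Proof.
have hh : h = (n - p)%N by [].
split.
  move=> x; rewrite -(permKV pi x) st_pi; set i := (pi^-1)%g x.
  have ilt := ltn_ord i.
  rewrite /pos ltn0; (repeat case: ifP => ?); lia.
move=> s hs.
transitivity #|[pred i : 'I_n | pos 0 0 i == Posz s]|.
  exact: (card_pre pi (fun i => pos 0 0 i == Posz s)).
have P0 : forall i : 'I_n, pos 0 0 i = if (i < h)%N then p%:Z + (i : nat)%:Z else (i - h)%:Z + 1.
  move=> i; have ilt := ltn_ord i; rewrite /pos ltn0; (repeat case: ifP => ?); lia.
case: (ltngtP s p) => sp.
- have i0n : (s + h - 1 < n)%N by lia.
  rewrite -(card1 (Ordinal i0n)); apply: eq_card => i; rewrite !inE P0.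
  have ilt := ltn_ord i.
  apply/idP/idP => H.
    apply/eqP/val_inj => /=; move: H; case: ifP => ? /eqP; lia.
  move/eqP/(congr1 val): H => /= H; case: ifP => ?; apply/eqP; lia.
- have i0n : (s - p < n)%N by lia.
  rewrite -(card1 (Ordinal i0n)); apply: eq_card => i; rewrite !inE P0.
  have ilt := ltn_ord i.
  apply/idP/idP => H.
    apply/eqP/val_inj => /=; move: H; case: ifP => ? /eqP; lia.
  move/eqP/(congr1 val): H => /= H; case: ifP => ?; apply/eqP; lia.
- subst s.
  have i0n : (0 < n)%N by lia.
  have i1n : (n - 1 < n)%N by lia.
  have ne : Ordinal i0n != Ordinal i1n by apply/eqP => /(congr1 val) /=; lia.
  rewrite (_ : 2%N = (Ordinal i0n != Ordinal i1n).+1); last by rewrite ne.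
  rewrite -card2.
  apply: eq_card => i; rewrite !inE P0.
  have ilt := ltn_ord i.
  apply/idP/idP => H.
    move: H; case: ifP => ? /eqP ?.
      by apply/orP; left; apply/eqP/val_inj => /=; lia.
    by apply/orP; right; apply/eqP/val_inj => /=; lia.
  case/orP: H => /eqP /(congr1 val) /= H; case: ifP => ?; apply/eqP; lia.
Qed.

End Back.


Section Fwd.
Local Open Scope ring_scope.

Lemma forward n p (pi : 'S_n) : (2 <= n)%N -> (1 <= p <= n - 1)%N -> @p_resultant n p pi ->
  [set pi i | i : 'I_n & (i < n - p)%N] = [set i : 'I_n | (i < n - p)%N].
Proof.
move=> hn hp [c [[Hb Hc] [c' [rc' [Hb' Hm]]]]].
set h := (n - p)%N.
have cntE : forall s : int, cnt c s =
    if (1 <= s) && (s <= (n - 1)%N%:Z) then (if s == p%:Z then 2%N else 1%N) else 0%N.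
  move=> s; case: ifP => hs.
    case: s hs => [s' | s'] hs; last by lia.
    rewrite cnt_card eqz_nat -(Hc s' ltac:(lia)).
    by apply: eq_card => x; rewrite !inE.
  rewrite /cnt big1 // => x _; case: eqP => // e; have := Hb x; rewrite e; lia.
have Hs : Shape c 0 n p.
  move=> s hs; rewrite cntE.
  case: (boolP ((1 <= s) && (s <= (n - 1)%N%:Z))) => h1;
  case: (boolP ((s == 0) || (s == 0 + n%:Z))) => h2;
  case: (boolP (s == p%:Z)) => h3; case: (boolP (s == 0 + p%:Z)) => h4 /=; lia.
have act1 : forall x, actv 0 n c x by move=> x; rewrite /actv; have := Hb x; lia.
have HT : (\sum_x ((actv 0 n c x && (x < h)) : nat) = n - p)%N.
  rewrite (eq_bigr (fun x : 'I_n => ((x < h)%N : nat))); last by move=> x _; rewrite act1.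
  by rewrite sum_lt // /h; lia.
have hp' : (1 <= p < n)%N by lia.
have [d [rd [Fd [Ad Id]]]] := main hn hp' Hs HT.
have Ic : Inv c.
  split.
    by move=> s; rewrite cntE; case: ifP => _ //; case: ifP.
  move=> j k jk; rewrite !cntE.
  case: ifP => // hj; case: ifP => hj2 //; case: ifP => // hk; case: ifP => hk2 //.
  move: hj2 hk2 => /eqP hj2 /eqP hk2; lia.
have injc' : forall x y, c' x = c' y -> x = y.
  move=> x y e; rewrite -(permKV pi x) -(permKV pi y) in e *.
  set i := (pi^-1)%g x in e *; set j := (pi^-1)%g y in e *.
  case: (ltngtP i j) => [ij|ji|/val_inj -> //].
    by have := Hm i j ij; rewrite e; lia.
  by have := Hm j i ji; rewrite e; lia.
have injd : forall x y, d x = d y -> x = y by move=> x y; apply: Id.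
have ed : c' = d.
  apply: (nf_unique Ic rc' rd); exact: inj_normal.
subst c'.
have lower : forall k (hk : (k < n)%N), k%:Z <= d (pi (Ordinal hk)).
  elim=> [|k IH] hk; first by have := Hb' (pi (Ordinal hk)); lia.
  have hk' : (k < n)%N by lia.
  have := IH hk'; have := Hm (Ordinal hk') (Ordinal hk) (ltnSn k); lia.
have upper : forall r k (hk : (k < n)%N), (n - 1 - k)%N = r -> d (pi (Ordinal hk)) <= k.+1%:Z.
  elim=> [|r IH] k hk hr; first by have := Hb' (pi (Ordinal hk)); lia.
  have hk' : (k.+1 < n)%N by lia.
  have := IH k.+1 hk' ltac:(lia); have := Hm (Ordinal hk) (Ordinal hk') (ltnSn k); lia.
have key : forall i : 'I_n, (d (pi i) < h%:Z) = (i < h)%N.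
  move=> [i hi].
  have := lower i hi; have := upper _ i hi erefl.
  have [_ K2 _] := Ad (pi (Ordinal hi)) (act1 _).
  move: K2; rewrite add0r /h => K2.
  case: (ltnP i (n - p)) => hih; lia.
apply/setP => x; rewrite !inE; apply/imsetP/idP.
  case=> i; rewrite inE => hi ->.
  have [_ _ K3] := Ad (pi i) (act1 _).
  by rewrite -K3 add0r key.
move=> hx; exists ((pi^-1)%g x); last by rewrite permKV.
rewrite inE -key permKV.
have [_ _ K3] := Ad x (act1 _).
by rewrite add0r in K3; rewrite K3.
Qed.

End Fwd.

Unset Implicit Arguments.

Theorem theorem2p10 (n p : nat) (pi : 'S_n) :
  (2 <= n)%N -> (1 <= p <= n - 1)%N ->
  @p_resultant n p pi <->
  [set pi i | i : 'I_n & (i < n - p)%N] = [set i : 'I_n | (i < n - p)%N].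
Proof.
move=> hn hp; split; first exact: forward.
move=> Hset.
exists (st p pi 0 0); split; first exact: in_S_st.
exists (st p pi p 0); split; first exact: (reach_all hn hp Hset (leqnn p)).
split.
  move=> x; rewrite -(permKV pi x) (final_pos pi hn hp); case: ifP => _; have := ltn_ord ((pi^-1)%g x); lia.
move=> i j ij; rewrite !(final_pos pi hn hp); case: ifP => h1; case: ifP => h2; lia.
Qed.
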